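(* Let $n\geqslant 1$ and $0\leqslant d\leqslant n-1$ be integers. Then the following two identities of rational functions in $q$ hold: \begin{align*} &\sum_{k=0}^{n-1}q^k\begin{bmatrix}2k\\ k+d\end{bmatrix}(-q^{k+1};q)_{n-1-k}\\ &\quad=\sum_{\substack{k=0\\ k\equiv n-d \pmod 2}}^{n-d}(-1)^{(n-d-k)/2}q^{3(n^2+k^2-d^2)/4-3nk/2+n-k}\frac{(1-q^k)(1+q^{n-k+1})}{(1-q^{2n-k+1})(1+q^n)}\begin{bmatrix}2n\\ k\end{bmatrix}, \end{align*} and \begin{align*} &\sum_{k=0}^{n-1}q^k\begin{bmatrix}2k\\ k+d\end{bmatrix}(-q^{k+1};q)_{n-1-k}^2 =\sum_{k=d+1}^{n}\sum_{j=k+1}^{n+1}q^{(j^2-3j+k^2-k)/2-d^2+1}\,\frac{1+q^{j-1}}{1+q^n}\begin{bmatrix}2n\\ n-j+1\end{bmatrix}. \end{align*}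
   Context: Here $q$ is an indeterminate. For $n\geq 1$, $(x;q)_n=(1-x)(1-xq)\cdots(1-xq^{n-1})$ and $(x;q)_0=1$. The $q$-binomial coefficient is $\begin{bmatrix}n\\ k\end{bmatrix}=\frac{(q;q)_n}{(q;q)_k(q;q)_{n-k}}$ if $0\leqslant k\leqslant n$ and $0$ otherwise. *)

(* Defs.v *)
From HB Require Import structures.
From mathcomp Require Import all_boot all_order all_algebra.
From mathcomp Require Import fraction.
Set Implicit Arguments. Unset Strict Implicit. Unset Printing Implicit Defensive.
Import Order.TTheory GRing.Theory Num.Theory.
Local Open Scope ring_scope.

Definition qpoch (K : comNzRingType) (x q : K) (n : nat) : K :=
  \prod_(i < n) (1 - x * q ^+ i).

Definition qbinom (K : fieldType) (q : K) (n k : nat) : K :=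
  if (k <= n)%N then qpoch q q n / (qpoch q q k * qpoch q q (n - k)) else 0.

Definition ratfun := {fraction {poly rat}}.
Definition qX : ratfun := FracField.tofrac 'X.

(* Main.v *)
Require Import Defs.
From HB Require Import structures.
From mathcomp Require Import all_boot all_order all_algebra.
From mathcomp Require Import fraction.
From mathcomp Require Import ring lra zify.
Import Order.TTheory GRing.Theory Num.Theory.
Local Open Scope ring_scope.

Ltac sidec := repeat (apply/andP; split); assumption.

Section Gen.
Variable K : fieldType.
Variable q : K.
Hypothesis q0 : q != 0.
Hypothesis qS : forall i, (0 < i)%N -> 1 - q ^+ i != 0.
Hypothesis qA : forall i, 1 + q ^+ i != 0.

Local Notation P := (qpoch q q).
Local Notation qb := (qbinom q).

Lemma qpochS x m : qpoch x q m.+1 = qpoch x q m * (1 - x * q ^+ m).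
Proof. by rewrite /qpoch big_ord_recr. Qed.

Lemma qpoch0 x : qpoch x q 0 = 1.
Proof. by rewrite /qpoch big_ord0. Qed.

Lemma qpS n : P n.+1 = P n * (1 - q ^+ n.+1).
Proof. by rewrite qpochS exprS. Qed.

Lemma qp_neq0 n : P n != 0.
Proof.
elim: n => [|n IH]; first by rewrite qpoch0 oner_eq0.
by rewrite qpS; apply: mulf_neq0; [exact: IH | exact: qS; exact: ltn0Sn].
Qed.

Lemma qb_gt N k : (N < k)%N -> qb N k = 0.
Proof. by move=> h; rewrite /qbinom leqNgt h. Qed.

Lemma qb_le N k : (k <= N)%N -> qb N k = P N / (P k * P (N - k)).
Proof. by move=> h; rewrite /qbinom h. Qed.

Arguments qb_gt {N k}.
Arguments qb_le {N k}.

Lemma qbNN N : qb N N = 1.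
Proof. by rewrite qb_le ?leqnn // subnn qpoch0 mulr1 (divff (qp_neq0 N)). Qed.

Lemma qbN0 N : qb N 0 = 1.
Proof. by rewrite qb_le ?leq0n // subn0 qpoch0 mul1r (divff (qp_neq0 N)). Qed.

Lemma qbsym N k : (k <= N)%N -> qb N k = qb N (N - k).
Proof.
move=> h; rewrite (qb_le h) qb_le ?leq_subr // subKn //.
by rewrite [P k * _]mulrC.
Qed.

Lemma qbR N k : (1 - q ^+ k.+1) * qb N k.+1 = (1 - q ^+ (N - k)) * qb N k.
Proof.
have [h|h|h] := ltngtP N k.
- by rewrite (qb_gt h) (qb_gt (leqW h)) !mulr0.
- rewrite (qb_le h) (qb_le (ltnW h)).
  have -> : (N - k = (N - k.+1).+1)%N by lia.
  rewrite !qpS.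
  have h1 := qp_neq0 N; have h2 := qp_neq0 k; have h3 := qp_neq0 (N - k.+1).
  have h4 := @qS k.+1 (ltn0Sn k); have h5 := @qS (N - k.+1).+1 (ltn0Sn _).
  by field; sidec.
- by rewrite h subnn expr0 subrr mul0r (qb_gt (ltnSn k)) mulr0.
Qed.

Lemma qbP N k : qb N.+1 k.+1 = qb N k + q ^+ k.+1 * qb N k.+1.
Proof.
have [h|h|h] := ltngtP N k.
- by rewrite (qb_gt h) (qb_gt (leqW h)) (qb_gt (h : (N.+1 < k.+1)%N)) mulr0 addr0.
- rewrite (qb_le h) (qb_le (ltnW h)) (qb_le (ltnW h : (k.+1 <= N.+1)%N)) subSS.
  have -> : (N - k = (N - k.+1).+1)%N by lia.
  rewrite (qpS N) (qpS k) (qpS (N - k.+1)).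
  have -> : q ^+ N.+1 = q ^+ k.+1 * q ^+ (N - k.+1).+1.
    by rewrite -exprD; congr (_ ^+ _); lia.
  have h1 := qp_neq0 N; have h2 := qp_neq0 k; have h3 := qp_neq0 (N - k.+1).
  have h4 := @qS k.+1 (ltn0Sn k); have h5 := @qS (N - k.+1).+1 (ltn0Sn _).
  by field; sidec.
- by rewrite h qbNN (qb_gt (ltnSn k)) mulr0 addr0 qbNN.
Qed.

Lemma loc1 n u :
  q ^+ u * (1 + q ^+ u.+1) * qb (2 * n).+2 (n + u).+2 =
  (1 + q ^+ n.+1) * (q ^+ u * (1 + q ^+ u.+1) * qb (2 * n) (n + u).+1
     + q ^+ n * (qb (2 * n) (n + u) + q ^+ (3 * u + 3) * qb (2 * n) (n + u).+2)).
Proof.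
rewrite (qbP (2 * n).+1 (n + u).+1) (qbP (2 * n) (n + u)) (qbP (2 * n) (n + u).+1).
have [h|h|h] := ltngtP u n.
- have hA := qbR (2 * n) (n + u).
  have hC := qbR (2 * n) (n + u).+1.
  move: hA hC.
  set A := qb _ (n + u); set B := qb _ (n + u).+1; set C := qb _ (n + u).+2.
  have [m em] : exists m, n = (u + m).+1 by exists (n - u.+1)%N; lia.
  have e1 : (2 * n - (n + u) = m.+1)%N by lia.
  have e2 : (2 * n - (n + u).+1 = m)%N by lia.
  rewrite e1 e2.
  have E1 : q ^+ (n + u).+1 = q ^+ u ^+ 2 * q ^+ m * q ^+ 2.
    by rewrite -exprM -!exprD; congr (_ ^+ _); lia.
  have E2 : q ^+ (n + u).+2 = q ^+ u ^+ 2 * q ^+ m * q ^+ 3.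
    by rewrite -exprM -!exprD; congr (_ ^+ _); lia.
  have E3 : q ^+ (3 * u + 3) = q ^+ u ^+ 3 * q ^+ 3.
    by rewrite -exprM -!exprD; congr (_ ^+ _); lia.
  have E4 : q ^+ n.+1 = q ^+ u * q ^+ m * q ^+ 2.
    by rewrite -!exprD; congr (_ ^+ _); lia.
  have E5 : q ^+ n = q ^+ u * q ^+ m * q.
    by rewrite -[q in RHS]expr1 -!exprD; congr (_ ^+ _); lia.
  have E6 : q ^+ m.+1 = q ^+ m * q by rewrite exprSr.
  have E7 : q ^+ u.+1 = q ^+ u * q by rewrite exprSr.
  rewrite E1 E2 E3 E4 E5 E6 E7.
  have nz1 : 1 - q ^+ m * q != 0 by rewrite -E6; apply: qS.
  have nz2 : 1 - q ^+ u ^+ 2 * q ^+ m * q ^+ 3 != 0 by rewrite -E2; apply: qS.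
  move=> hA hC.
  have eA : A = (1 - q ^+ u ^+ 2 * q ^+ m * q ^+ 2) * B / (1 - q ^+ m * q).
    by rewrite hA mulrC mulKf.
  have eC : C = (1 - q ^+ m) * B / (1 - q ^+ u ^+ 2 * q ^+ m * q ^+ 3).
    by rewrite -hC mulrC mulKf.
  rewrite eA eC.
  field; sidec.
- rewrite (qb_gt (_ : (2 * n < (n + u))%N)); last by lia.
  rewrite (qb_gt (_ : (2 * n < (n + u).+1)%N)); last by lia.
  rewrite (qb_gt (_ : (2 * n < (n + u).+2)%N)); last by lia.
  by rewrite !(mulr0, mul0r, addr0, add0r).
- subst u.
  rewrite (qb_gt (_ : (2 * n < (n + n).+1)%N)); last by lia.
  rewrite (qb_gt (_ : (2 * n < (n + n).+2)%N)); last by lia.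
  have -> : (n + n = 2 * n)%N by lia.
  rewrite qbNN !(mulr0, mul0r, addr0, add0r, mulr1).
  by rewrite mulrC.
Qed.

Definition hh n t := q ^+ n * (q ^+ 'C(t, 2) * qb (2 * n) (n + t)
                               - q ^+ 'C(t.+2, 2) * qb (2 * n) (n + t).+1).

Lemma binS2 t : 'C(t.+1, 2) = ('C(t, 2) + t)%N.
Proof. by rewrite binS bin1. Qed.

Lemma loc2 n t :
  q ^+ 'C(t.+1, 2) * (1 + q ^+ t.+1) * qb (2 * n).+2 (n + t).+2 =
  (1 + q ^+ n.+1) * ((1 + q ^+ n) * (q ^+ 'C(t.+1, 2) * (1 + q ^+ t.+1) * qb (2 * n) (n + t).+1)
     + (hh n t - hh n t.+1)).
Proof.
rewrite /hh !addnS.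
rewrite (qbP (2 * n).+1 (n + t).+1) (qbP (2 * n) (n + t)) (qbP (2 * n) (n + t).+1).
have Ec1 : q ^+ 'C(t.+1, 2) = q ^+ 'C(t, 2) * q ^+ t by rewrite binS2 exprD.
have Ec2 : q ^+ 'C(t.+2, 2) = q ^+ 'C(t, 2) * q ^+ t ^+ 2 * q.
  by rewrite !binS2 -exprM -[q in RHS]expr1 -!exprD; congr (_ ^+ _); lia.
have Ec3 : q ^+ 'C(t.+3, 2) = q ^+ 'C(t, 2) * q ^+ t ^+ 3 * q ^+ 3.
  by rewrite !binS2 -exprM -!exprD; congr (_ ^+ _); lia.
rewrite Ec1 Ec2 Ec3.
have [h|h|h] := ltngtP t n.
- have hA := qbR (2 * n) (n + t).
  have hC := qbR (2 * n) (n + t).+1.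
  move: hA hC.
  set A := qb _ (n + t); set B := qb _ (n + t).+1; set C := qb _ (n + t).+2.
  have [m em] : exists m, n = (t + m).+1 by exists (n - t.+1)%N; lia.
  have e1 : (2 * n - (n + t) = m.+1)%N by lia.
  have e2 : (2 * n - (n + t).+1 = m)%N by lia.
  rewrite e1 e2.
  have E1 : q ^+ (n + t).+1 = q ^+ t ^+ 2 * q ^+ m * q ^+ 2.
    by rewrite -exprM -!exprD; congr (_ ^+ _); lia.
  have E2 : q ^+ (n + t).+2 = q ^+ t ^+ 2 * q ^+ m * q ^+ 3.
    by rewrite -exprM -!exprD; congr (_ ^+ _); lia.
  have E4 : q ^+ n.+1 = q ^+ t * q ^+ m * q ^+ 2.
    by rewrite -!exprD; congr (_ ^+ _); lia.
  have E5 : q ^+ n = q ^+ t * q ^+ m * q.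
    by rewrite -[q in RHS]expr1 -!exprD; congr (_ ^+ _); lia.
  have E6 : q ^+ m.+1 = q ^+ m * q by rewrite exprSr.
  have E7 : q ^+ t.+1 = q ^+ t * q by rewrite exprSr.
  rewrite E1 E2 E4 E5 E6 E7.
  have nz1 : 1 - q ^+ m * q != 0 by rewrite -E6; apply: qS.
  have nz2 : 1 - q ^+ t ^+ 2 * q ^+ m * q ^+ 3 != 0 by rewrite -E2; apply: qS.
  move=> hA hC.
  have eA : A = (1 - q ^+ t ^+ 2 * q ^+ m * q ^+ 2) * B / (1 - q ^+ m * q).
    by rewrite hA mulrC mulKf.
  have eC : C = (1 - q ^+ m) * B / (1 - q ^+ t ^+ 2 * q ^+ m * q ^+ 3).
    by rewrite -hC mulrC mulKf.
  rewrite eA eC.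
  field; sidec.
- rewrite (qb_gt (_ : (2 * n < (n + t))%N)); last by lia.
  rewrite (qb_gt (_ : (2 * n < (n + t).+1)%N)); last by lia.
  rewrite (qb_gt (_ : (2 * n < (n + t).+2)%N)); last by lia.
  by rewrite !(mulr0, mul0r, addr0, add0r, subrr).
- subst t.
  rewrite (qb_gt (_ : (2 * n < (n + n).+1)%N)); last by lia.
  rewrite (qb_gt (_ : (2 * n < (n + n).+2)%N)); last by lia.
  have -> : (n + n = 2 * n)%N by lia.
  rewrite qbNN !(mulr0, mul0r, addr0, add0r, mulr1, subr0).
  rewrite exprSr; ring.
Qed.

Definition L1 d n := \sum_(0 <= k < n)
  q ^+ k * qb (2 * k) (k + d) * qpoch (- q ^+ k.+1) q (n - 1 - k).

Lemma L1_rec d n : L1 d n.+1 = (1 + q ^+ n) * L1 d n + q ^+ n * qb (2 * n) (n + d).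
Proof.
rewrite /L1 big_nat_recr //=.
have -> : (n.+1 - 1 - n = 0)%N by lia.
rewrite qpoch0 mulr1; congr (_ + _).
rewrite mulr_sumr; apply: eq_big_nat => k /andP [_ hk].
have -> : (n.+1 - 1 - k = (n - 1 - k).+1)%N by lia.
rewrite qpochS.
have -> : - q ^+ k.+1 * q ^+ (n - 1 - k) = - q ^+ n.
  by rewrite mulNr -exprD; congr (- (_ ^+ _)); lia.
rewrite opprK; ring.
Qed.

Definition bterm d n i := (-1) ^+ i * q ^+ (3 * i * (d + i)) *
  (q ^+ (d + 2 * i) * (1 + q ^+ (d + 2 * i).+1) * qb (2 * n) (n + (d + 2 * i)).+1).
Definition gterm d n i := (-1) ^+ i * q ^+ (3 * i * (d + i)) * qb (2 * n) (n + (d + 2 * i)).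
Definition B1 d n := \sum_(0 <= i < n) bterm d n i.

Lemma bterm_step d n i : bterm d n.+1 i =
  (1 + q ^+ n.+1) * (bterm d n i + q ^+ n * (gterm d n i - gterm d n i.+1)).
Proof.
rewrite /bterm /gterm.
have -> : (2 * n.+1 = (2 * n).+2)%N by lia.
have -> : ((n.+1 + (d + 2 * i)).+1 = (n + (d + 2 * i)).+2)%N by lia.
rewrite loc1.
have -> : (n + (d + 2 * i.+1) = (n + (d + 2 * i)).+2)%N by lia.
have -> : q ^+ (3 * i.+1 * (d + i.+1)) = q ^+ (3 * i * (d + i)) * q ^+ (3 * (d + 2 * i) + 3).
  by rewrite -exprD; congr (_ ^+ _); lia.
rewrite [(-1) ^+ i.+1]exprS; ring.
Qed.

Lemma B1_rec d n : B1 d n.+1 = (1 + q ^+ n.+1) * (B1 d n + q ^+ n * qb (2 * n) (n + d)).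
Proof.
rewrite /B1 (eq_bigr _ (fun i _ => bterm_step d n i)) -mulr_sumr big_split /=.
rewrite big_nat_recr //= -mulr_sumr.
have -> : bterm d n n = 0.
  by rewrite /bterm (qb_gt (_ : (2 * n < (n + (d + 2 * n)).+1)%N)) ?mulr0 //; lia.
have -> : \sum_(0 <= i < n.+1) (gterm d n i - gterm d n i.+1) = gterm d n 0 - gterm d n n.+1.
  rewrite -(opprB (gterm d n n.+1)) -telescope_sumr // -sumrN.
  by apply: eq_bigr => i _; rewrite opprB.
have -> : gterm d n n.+1 = 0.
  by rewrite /gterm (qb_gt (_ : (2 * n < (n + (d + 2 * n.+1)))%N)) ?mulr0 //; lia.
by rewrite /gterm expr0 !mul1r muln0 addn0 subr0 addr0.
Qed.

Lemma part1_core d n : (1 + q ^+ n) * L1 d n = B1 d n.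
Proof.
elim: n => [|n IH].
  by rewrite /L1 /B1 !big_geq // mulr0.
by rewrite L1_rec B1_rec -IH.
Qed.

Definition L2 d n := \sum_(0 <= k < n)
  q ^+ k * qb (2 * k) (k + d) * (qpoch (- q ^+ k.+1) q (n - 1 - k)) ^+ 2.

Lemma L2_rec d n : L2 d n.+1 = (1 + q ^+ n) ^+ 2 * L2 d n + q ^+ n * qb (2 * n) (n + d).
Proof.
rewrite /L2 big_nat_recr //=.
have -> : (n.+1 - 1 - n = 0)%N by lia.
rewrite qpoch0 expr1n mulr1; congr (_ + _).
rewrite mulr_sumr; apply: eq_big_nat => k /andP [_ hk].
have -> : (n.+1 - 1 - k = (n - 1 - k).+1)%N by lia.
rewrite qpochS.
have -> : - q ^+ k.+1 * q ^+ (n - 1 - k) = - q ^+ n.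
  by rewrite mulNr -exprD; congr (- (_ ^+ _)); lia.
rewrite opprK; ring.
Qed.

Definition Kn n s := \sum_(s <= t < n)
  q ^+ 'C(t.+1, 2) * (1 + q ^+ t.+1) * qb (2 * n) (n + t).+1.

Lemma Kn_rec n s : Kn n.+1 s = (1 + q ^+ n.+1) * ((1 + q ^+ n) * Kn n s + hh n s).
Proof.
have [hs|hs] := leqP s n.
- rewrite /Kn.
  have -> : (2 * n.+1 = (2 * n).+2)%N by lia.
  have e : forall t, ((n.+1 + t).+1 = (n + t).+2)%N by move=> t; lia.
  under eq_bigr => t _ do rewrite e loc2.
  rewrite -mulr_sumr big_split /= -mulr_sumr.
  rewrite big_nat_recr /=; last by lia.
  rewrite (qb_gt (_ : (2 * n < (n + n).+1)%N)); last by lia.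
  rewrite mulr0 addr0.
  have -> : \sum_(s <= i < n.+1) (hh n i - hh n i.+1) = hh n s - hh n n.+1.
    rewrite -(opprB (hh n n.+1)) -telescope_sumr; last by lia.
    by rewrite -sumrN; apply: eq_bigr => i _; rewrite opprB.
  have -> : hh n n.+1 = 0.
    rewrite /hh (qb_gt (_ : (2 * n < (n + n.+1))%N)); last by lia.
    rewrite (qb_gt (_ : (2 * n < (n + n.+1).+1)%N)); last by lia.
    by rewrite !mulr0 subr0 mulr0.
  by rewrite subr0.
- rewrite /Kn !big_geq; [|lia|lia].
  rewrite /hh (qb_gt (_ : (2 * n < (n + s))%N)); last by lia.
  rewrite (qb_gt (_ : (2 * n < (n + s).+1)%N)); last by lia.
  by rewrite !(mulr0, subr0, addr0).
Qed.

Lemma tri s : ('C(s.+1, 2) + 'C(s, 2) = s * s)%N.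
Proof.
elim: s => [|s IH] //.
rewrite !binS2 in IH *; nia.
Qed.

Definition R2 d n := \sum_(d <= s < n) q ^+ 'C(s.+1, 2) * Kn n s.

Lemma part2_core d n : q ^+ (d * d) * ((1 + q ^+ n) * L2 d n) = R2 d n.
Proof.
elim: n => [|n IH].
  by rewrite /L2 /R2 !big_geq // mulr0 mulr0.
rewrite L2_rec.
have [hd|hd] := leqP d n.
- rewrite /R2 (eq_bigr _ (fun s _ => congr1 _ (Kn_rec n s))).
  have -> : \sum_(d <= i < n.+1) q ^+ 'C(i.+1, 2) * ((1 + q ^+ n.+1) * ((1 + q ^+ n) * Kn n i + hh n i))
     = (1 + q ^+ n.+1) * ((1 + q ^+ n) * (\sum_(d <= i < n.+1) q ^+ 'C(i.+1, 2) * Kn n i)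
          + \sum_(d <= i < n.+1) q ^+ 'C(i.+1, 2) * hh n i).
    rewrite mulrDr !mulr_sumr -big_split /=.
    by apply: eq_bigr => i _; ring.
  rewrite big_nat_recr /=; last by lia.
  rewrite (_ : Kn n n = 0); last by rewrite /Kn big_geq.
  rewrite mulr0 addr0.
  have -> : \sum_(d <= i < n.+1) q ^+ 'C(i.+1, 2) * hh n i =
      q ^+ n * ((q ^+ (d * d) * qb (2 * n) (n + d)) - (q ^+ (n.+1 * n.+1) * qb (2 * n) (n + n.+1))).
    rewrite -(opprB (q ^+ (n.+1 * n.+1) * qb (2 * n) (n + n.+1))).
    rewrite -(telescope_sumr (fun s => q ^+ (s * s) * qb (2 * n) (n + s))); last by lia.
    rewrite -sumrN mulr_sumr; apply: eq_bigr => i _.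
    have E1 : q ^+ (i * i) = q ^+ 'C(i.+1, 2) * q ^+ 'C(i, 2) by rewrite -exprD tri.
    have E2 : q ^+ (i.+1 * i.+1) = q ^+ 'C(i.+1, 2) * q ^+ 'C(i.+2, 2).
      by rewrite -exprD addnC tri.
    rewrite /hh E1 E2 addnS; ring.
  rewrite (qb_gt (_ : (2 * n < n + n.+1)%N)); last by lia.
  rewrite mulr0 subr0 -/(R2 d n) -IH; ring.
- rewrite /R2 !big_geq; [|lia].
  rewrite /R2 big_geq in IH; last by lia.
  rewrite (qb_gt (_ : (2 * n < n + d)%N)); last by lia.
  rewrite mulr0 addr0.
  transitivity ((1 + q ^+ n.+1) * (1 + q ^+ n) * (q ^+ (d * d) * ((1 + q ^+ n) * L2 d n))); first by ring.
  by rewrite IH mulr0.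
Qed.

Lemma evensum_step m : (forall f : nat -> K,
    \sum_(0 <= k < m.+1 | k == m %[mod 2]) f k = \sum_(0 <= i < m./2.+1) f (m - 2 * i)%N) ->
  forall f : nat -> K,
    \sum_(0 <= k < m.+3 | k == m.+2 %[mod 2]) f k = \sum_(0 <= i < m.+2./2.+1) f (m.+2 - 2 * i)%N.
Proof.
move=> IH f.
rewrite big_mkcond big_nat_recr // big_nat_recr //= -big_mkcond.
rewrite eqxx.
have -> : (m.+1 %% 2 == m.+2 %% 2)%N = false.
  by apply/negbTE/eqP; lia.
rewrite addr0.
have e2 : (m.+2 %% 2 = m %% 2)%N by lia.
rewrite (eq_bigl (fun k => k == m %[mod 2])); last by move=> k; rewrite /= e2.
rewrite IH.
rewrite big_nat_recl // muln0 subn0 addrC.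
congr (_ + _); apply: eq_bigr => i _.
by rewrite (_ : (m.+2 - 2 * i.+1 = m - 2 * i)%N) //; lia.
Qed.

Lemma evensum m (f : nat -> K) :
  \sum_(0 <= k < m.+1 | k == m %[mod 2]) f k = \sum_(0 <= i < m./2.+1) f (m - 2 * i)%N.
Proof.
suff H : forall m, (forall f : nat -> K, \sum_(0 <= k < m.+1 | k == m %[mod 2]) f k
                        = \sum_(0 <= i < m./2.+1) f (m - 2 * i)%N) /\
                   (forall f : nat -> K, \sum_(0 <= k < m.+2 | k == m.+1 %[mod 2]) f k
                        = \sum_(0 <= i < m.+1./2.+1) f (m.+1 - 2 * i)%N).
  by case: (H m).
elim => [|p [IH1 IH2]]; split.
- by move=> g; rewrite big_mkcond !big_nat1.
- move=> g; rewrite big_mkcond big_nat_recr //= big_nat1 /= add0r.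
  by rewrite big_nat1.
- exact: IH2.
- exact: evensum_step.
Qed.

Lemma term1 n d i : (2 * i <= n - d)%N -> (d <= n)%N ->
     (-1) ^+ ((n - d - (n - d - 2 * i)%N) %/ 2)
     * q ^ (((3 * ((n%:Z) ^+ 2 + ((n - d - 2 * i)%N%:Z) ^+ 2 - (d%:Z) ^+ 2)
               - 6 * (n%:Z) * ((n - d - 2 * i)%N%:Z)) %/ 4)%Z + n%:Z - (n - d - 2 * i)%N%:Z)
     * ((1 - q ^+ (n - d - 2 * i)%N) * (1 + q ^+ (n - (n - d - 2 * i)%N + 1)))
       / ((1 - q ^+ (2 * n - (n - d - 2 * i)%N + 1)) * (1 + q ^+ n))
     * qb (2 * n) (n - d - 2 * i)%N
  = bterm d n i / (1 + q ^+ n).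
Proof.
move=> hi hd.
set k := (n - d - 2 * i)%N.
have hk : (k + d + 2 * i = n)%N by rewrite /k; lia.
have -> : ((n - d - k) %/ 2 = i)%N.
  by rewrite (_ : (n - d - k = i * 2)%N) ?mulnK //; rewrite /k; lia.
have -> : (((3 * ((n%:Z) ^+ 2 + (k%:Z) ^+ 2 - (d%:Z) ^+ 2)
               - 6 * (n%:Z) * (k%:Z)) %/ 4)%Z + n%:Z - k%:Z)
          = (3 * i * (d + i) + (d + 2 * i))%N%:Z.
  have hn : n%:Z = k%:Z + d%:Z + 2 * i%:Z by lia.
  rewrite hn.
  have -> : (3 * ((k%:Z + d%:Z + 2 * i%:Z) ^+ 2 + k%:Z ^+ 2 - d%:Z ^+ 2)
               - 6 * (k%:Z + d%:Z + 2 * i%:Z) * k%:Z) = (3 * i * (d + i))%N%:Z * 4.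
    rewrite !PoszM PoszD; ring.
  rewrite mulzK //.
  rewrite !PoszD !PoszM; ring.
have -> : (n - k + 1 = (d + 2 * i).+1)%N by lia.
have hR : (1 - q ^+ k) * qb (2 * n) k = (1 - q ^+ (2 * n - k + 1)) * qb (2 * n) (n + (d + 2 * i)).+1.
  case ek: k => [|k'].
    rewrite expr0 subrr mul0r (qb_gt (_ : (2 * n < (n + (d + 2 * i)).+1)%N)) ?mulr0 //; lia.
  rewrite qbR qbsym; last by lia.
  congr (_ * _); [congr (1 - q ^+ _); lia | congr (qb _ _); lia].
have nz1 : 1 - q ^+ (2 * n - k + 1) != 0 by apply: qS; lia.
have nz2 := qA n.
rewrite -exprnP /bterm exprD.
set R := qb (2 * n) (n + (d + 2 * i)).+1.
set Q := qb (2 * n) k.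
have -> : R = (1 - q ^+ k) * Q / (1 - q ^+ (2 * n - k + 1)) by rewrite hR mulrC mulKf.
by field; sidec.
Qed.

Lemma rhs1 n d : (d <= n)%N -> (1 <= n)%N ->
  \sum_(0 <= k < (n - d).+1 | k == n - d %[mod 2])
     (-1) ^+ ((n - d - k) %/ 2)
     * q ^ (((3 * ((n%:Z) ^+ 2 + (k%:Z) ^+ 2 - (d%:Z) ^+ 2)
               - 6 * (n%:Z) * (k%:Z)) %/ 4)%Z + n%:Z - k%:Z)
     * ((1 - q ^+ k) * (1 + q ^+ (n - k + 1)))
       / ((1 - q ^+ (2 * n - k + 1)) * (1 + q ^+ n))
     * qb (2 * n) k
  = B1 d n / (1 + q ^+ n).
Proof.
move=> hd hn.
rewrite evensum /B1 mulr_suml.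
rewrite [in RHS](big_cat_nat (n := (n - d)./2.+1)) /=; [| by [] | by rewrite -divn2; lia].
rewrite [X in _ = _ + X]big1_seq ?addr0.
  apply: eq_big_nat => i /andP [_ hi].
  by rewrite term1 //; move: hi; rewrite -divn2; lia.
move=> i /andP [_]; rewrite mem_index_iota => /andP [hi _].
rewrite /bterm (qb_gt (_ : (2 * n < (n + (d + 2 * i)).+1)%N)); last by move: hi; rewrite -divn2; lia.
by rewrite !mulr0 mul0r.
Qed.

Lemma bin2D t : ('C(t.+1, 2) * 2 = t * t.+1)%N.
Proof. elim: t => [|t IH] //; rewrite binS2; nia. Qed.

Lemma rhs2 n d :
  \sum_(d.+1 <= k < n.+1) \sum_(k.+1 <= j < n.+2)
     q ^ (((((j%:Z) ^+ 2 - 3 * (j%:Z) + (k%:Z) ^+ 2 - k%:Z) %/ 2)%Z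
             - (d%:Z) ^+ 2 + 1))
     * (1 + q ^+ (j - 1)) / (1 + q ^+ n)
     * qb (2 * n) (n.+1 - j)
  = R2 d n / (q ^+ (d * d) * (1 + q ^+ n)).
Proof.
rewrite big_add1 /= /R2 mulr_suml.
apply: eq_big_nat => s /andP [hds hsn].
rewrite big_add1 /= big_add1 /= /Kn mulr_sumr mulr_suml.
apply: eq_big_nat => t /andP [hst htn].
have -> : (t.+2 - 1 = t.+1)%N by lia.
rewrite (qbsym (2 * n) (n.+1 - t.+2)); last by lia.
rewrite (_ : (2 * n - (n.+1 - t.+2) = (n + t).+1)%N); last by lia.
have -> : ((((t.+2%:Z) ^+ 2 - 3 * (t.+2%:Z) + (s.+1%:Z) ^+ 2 - s.+1%:Z) %/ 2)%Z
             - (d%:Z) ^+ 2 + 1) = ('C(t.+1, 2) + 'C(s.+1, 2))%N%:Z - (d * d)%N%:Z.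
  have ht2 := bin2D t; have hs2 := bin2D s.
  have -> : ((t.+2%:Z) ^+ 2 - 3 * (t.+2%:Z) + (s.+1%:Z) ^+ 2 - s.+1%:Z)
       = (('C(t.+1, 2) + 'C(s.+1, 2))%N%:Z - 1) * 2.
    rewrite !expr2; nia.
  rewrite mulzK // expr2; lia.
rewrite expfzDr // -exprz_inv -!exprnP exprVn exprD.
have nz1 := qA n.
have nz2 : q ^+ (d * d) != 0 by apply: expf_neq0.
by field; sidec.
Qed.

Theorem main_gen (n d : nat) (hn : (1 <= n)%N) (hd : (d <= n - 1)%N) :
  (\sum_(0 <= k < n)
     q ^+ k * qb (2 * k) (k + d) * qpoch (- q ^+ k.+1) q (n - 1 - k)
   =
   \sum_(0 <= k < (n - d).+1 | k == n - d %[mod 2])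
     (-1) ^+ ((n - d - k) %/ 2)
     * q ^ (((3 * ((n%:Z) ^+ 2 + (k%:Z) ^+ 2 - (d%:Z) ^+ 2)
               - 6 * (n%:Z) * (k%:Z)) %/ 4)%Z + n%:Z - k%:Z)
     * ((1 - q ^+ k) * (1 + q ^+ (n - k + 1)))
       / ((1 - q ^+ (2 * n - k + 1)) * (1 + q ^+ n))
     * qb (2 * n) k)
  /\
  (\sum_(0 <= k < n)
     q ^+ k * qb (2 * k) (k + d) * (qpoch (- q ^+ k.+1) q (n - 1 - k)) ^+ 2
   =
   \sum_(d.+1 <= k < n.+1) \sum_(k.+1 <= j < n.+2)
     q ^ (((((j%:Z) ^+ 2 - 3 * (j%:Z) + (k%:Z) ^+ 2 - k%:Z) %/ 2)%Z
             - (d%:Z) ^+ 2 + 1))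
     * (1 + q ^+ (j - 1)) / (1 + q ^+ n)
     * qb (2 * n) (n.+1 - j)).
Proof.
have hdn : (d <= n)%N by lia.
have nz1 := qA n.
have nz2 : q ^+ (d * d) != 0 by apply: expf_neq0.
split.
- match goal with |- _ = ?R => change (L1 d n = R) end.
  rewrite (rhs1 n d hdn hn) -part1_core.
  by field; sidec.
- match goal with |- _ = ?R => change (L2 d n = R) end.
  rewrite rhs2 -part2_core.
  by field; sidec.
Qed.

End Gen.

Lemma qX_pow i : qX ^+ i = FracField.tofrac ('X^i : {poly rat}).
Proof. by rewrite /qX tofracXn. Qed.

Lemma qX_neq0 : qX != 0.
Proof. by rewrite /qX tofrac_eq0 polyX_eq0. Qed.

Lemma one_sub_qX i : (0 < i)%N -> 1 - qX ^+ i != 0.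
Proof.
move=> hi; rewrite qX_pow -tofrac1 -tofracB tofrac_eq0 subr_eq0.
apply/eqP => /(congr1 (fun p : {poly rat} => size p)).
by rewrite size_polyXn size_poly1; case: i hi.
Qed.

Lemma one_add_qX i : 1 + qX ^+ i != 0.
Proof.
rewrite qX_pow -tofrac1 -tofracD tofrac_eq0.
case: i => [|i].
  rewrite expr0; apply/eqP => /(congr1 (fun p : {poly rat} => p`_0)).
  by rewrite coefD coef1 coef0.
rewrite addrC; apply/eqP => /(congr1 (fun p : {poly rat} => size p)).
by rewrite size_polyDl ?size_polyXn ?size_poly1 // size_poly0.
Qed.

Theorem theorem1p1 (n d : nat) (hn : (1 <= n)%N) (hd : (d <= n - 1)%N) :
  (\sum_(0 <= k < n)
     qX ^+ k * qbinom qX (2 * k) (k + d) * qpoch (- qX ^+ k.+1) qX (n - 1 - k)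
   =
   \sum_(0 <= k < (n - d).+1 | k == n - d %[mod 2])
     (-1) ^+ ((n - d - k) %/ 2)
     * qX ^ (((3 * ((n%:Z) ^+ 2 + (k%:Z) ^+ 2 - (d%:Z) ^+ 2)
               - 6 * (n%:Z) * (k%:Z)) %/ 4)%Z + n%:Z - k%:Z)
     * ((1 - qX ^+ k) * (1 + qX ^+ (n - k + 1)))
       / ((1 - qX ^+ (2 * n - k + 1)) * (1 + qX ^+ n))
     * qbinom qX (2 * n) k)
  /\
  (\sum_(0 <= k < n)
     qX ^+ k * qbinom qX (2 * k) (k + d) * (qpoch (- qX ^+ k.+1) qX (n - 1 - k)) ^+ 2
   =
   \sum_(d.+1 <= k < n.+1) \sum_(k.+1 <= j < n.+2)
     qX ^ (((((j%:Z) ^+ 2 - 3 * (j%:Z) + (k%:Z) ^+ 2 - k%:Z) %/ 2)%Z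
             - (d%:Z) ^+ 2 + 1))
     * (1 + qX ^+ (j - 1)) / (1 + qX ^+ n)
     * qbinom qX (2 * n) (n.+1 - j)).
Proof.
exact: (@main_gen _ qX qX_neq0 one_sub_qX one_add_qX n d hn hd).
Qed.
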